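(* Let $\mathcal{H}$ be a Hilbert space of finite dimension $d\ge 2$, let $\mathcal{F}(\mathcal{H})\subseteq\mathcal{D}(\mathcal{H})$ be a closed set of free states, and let $\rho\in\mathcal{D}(\mathcal{H})\setminus\mathcal{F}(\mathcal{H})$. For $s>0$ and $m=2,\dots,d$ let $W_m(\rho,s)$ be Hermitian operators on $\mathcal{H}^{\otimes m}$ satisfying $\operatorname{tr}[W_m(\rho,s)\eta^{\otimes m}]=S_m\!\left(\frac{1+s}{s}\eta-\frac1s\rho\right)$ for all $\eta\in\mathcal{D}(\mathcal{H})$. If $0<s'<s$, then \[\{\eta\in\mathcal{D}(\mathcal{H}):\operatorname{tr}[W_m(\rho,s')\eta^{\otimes m}]\ge0\ \forall m=2,\dots,d\}\subsetneq\{\eta\in\mathcal{D}(\mathcal{H}):\operatorname{tr}[W_m(\rho,s)\eta^{\otimes m}]\ge0\ \forall m=2,\dots,d\}.\]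
   Context: $\mathcal{D}(\mathcal{H})$ is the set of density operators on $\mathcal{H}$. For a Hermitian operator $X$ on $\mathcal{H}$, define recursively $S_0(X)=1$ and $S_m(X)=\frac1m\sum_{l=1}^m(-1)^{l-1}\operatorname{tr}[X^l]\,S_{m-l}(X)$ for $m\ge1$. *)

(* Defs.v *)
From HB Require Import structures.
From mathcomp Require Import all_boot all_order all_algebra.
From mathcomp Require Import all_classical all_reals topology normedtype sequences.
From mathcomp Require Import complex mxtens.
Set Implicit Arguments. Unset Strict Implicit. Unset Printing Implicit Defensive.
Import Order.TTheory GRing.Theory Num.Theory numFieldNormedType.Exports.
Local Open Scope classical_set_scope.
Local Open Scope ring_scope.

Section QDefs.
Variable R : realType.
Local Notation C := (R[i]).

Definition adjmx (m n : nat) (A : 'M[C]_(m, n)) : 'M[C]_(n, m) :=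
  \matrix_(i, j) (A j i)^*.

Definition is_hermitian (n : nat) (A : 'M[C]_n) : Prop := adjmx A = A.

Definition psd (n : nat) (A : 'M[C]_n) : Prop :=
  is_hermitian A /\ forall v : 'cV[C]_n, 0 <= (adjmx v *m A *m v) 0 0.

Definition density (d : nat) (A : 'M[C]_d) : Prop := psd A /\ \tr A = 1.

(* matrix powers (valid for any dimension, including n = 0) *)
Fixpoint mxpow (n : nat) (A : 'M[C]_n) (l : nat) : 'M[C]_n :=
  match l with 0 => 1%:M | l'.+1 => A *m mxpow A l' end.

Fixpoint tdim (d m : nat) : nat :=
  match m with 0 => 1%N | m'.+1 => (d * tdim d m')%N end.

Fixpoint tpow (d : nat) (A : 'M[C]_d) (m : nat) : 'M[C]_(tdim d m) :=
  match m return 'M[C]_(tdim d m) with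
  | 0 => 1%:M
  | m'.+1 => A *t tpow A m'
  end.

Fixpoint Sseq (n : nat) (X : 'M[C]_n) (k : nat) : seq C :=
  match k with
  | 0 => [:: 1]
  | k'.+1 =>
      let s := Sseq X k' in
      rcons s (k'.+1%:R^-1 *
        \sum_(1 <= l < k'.+2) ((-1) ^+ (l.-1) * \tr (mxpow X l) * s`_(k'.+1 - l)))
  end.

Definition Sm (n : nat) (X : 'M[C]_n) (m : nat) : C := (Sseq X m)`_m.

(* closedness of a set of matrices (in the Euclidean topology of entries,
   real and imaginary parts), stated sequentially *)
Definition mx_closed (d : nat) (F : 'M[C]_d -> Prop) : Prop :=
  forall (u : nat -> 'M[C]_d) (eta : 'M[C]_d),
    (forall k, F (u k)) ->
    (forall i j, (fun k => complex.Re (u k i j)) @ \oo --> (complex.Re (eta i j) : R)) ->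
    (forall i j, (fun k => complex.Im (u k i j)) @ \oo --> (complex.Im (eta i j) : R)) ->
    F eta.

Definition witness_set (d : nat) (W : forall m, 'M[C]_(tdim d m)) (eta : 'M[C]_d) : Prop :=
  density eta /\ forall m, (2 <= m <= d)%N -> 0 <= \tr (W m *m tpow eta m).

End QDefs.

(* Main.v *)
Require Import Defs.
From HB Require Import structures.
From mathcomp Require Import all_boot all_order all_algebra.
From mathcomp Require Import all_classical all_reals topology normedtype sequences.
From mathcomp Require Import complex mxtens.
From mathcomp Require Import spectral sesquilinear zify ring.
Import Order.TTheory GRing.Theory Num.Theory.
Local Open Scope ring_scope.

Section Newton.
Variable C : numFieldType.
Implicit Types (s : seq C) (x : C).

Definition Pp s : {poly C} := \prod_(x <- s) (1 + x *: 'X).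
Definition es s k := (Pp s)`_k.
Definition ps s l := \sum_(x <- s) x ^+ l.

Lemma es_nil k : es [::] k = (k == 0)%:R.
Proof. by rewrite /es /Pp big_nil coef1. Qed.

Lemma es_cons x s k :
  es (x :: s) k = es s k + (if k is k'.+1 then x * es s k' else 0).
Proof.
rewrite /es /Pp big_cons mulrDl mul1r coefD -scalerAl coefZ coefXM.
by case: k => [|k] /=; rewrite ?mulr0.
Qed.

Lemma ps_cons x s l : ps (x :: s) l = x ^+ l + ps s l.
Proof. by rewrite /ps big_cons. Qed.

Lemma U_tel x s m :
  \sum_(l < m) (-1) ^+ l * x ^+ l.+1 * es (x :: s) (m - l.+1)
  = if m is m'.+1 then x * es s m' else 0.
Proof.
elim: m => [|m IH]; first by rewrite big_ord0.
rewrite big_ord_recl /= subn1 /=.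
have -> : \sum_(i < m) (-1) ^+ (lift ord0 i) * x ^+ (lift ord0 i).+1 *
     es (x :: s) (m.+1 - (lift ord0 i).+1)
   = - x * \sum_(l < m) (-1) ^+ l * x ^+ l.+1 * es (x :: s) (m - l.+1).
  rewrite mulr_sumr; apply: eq_bigr => i _ /=.
  rewrite /bump /= add1n subSS !exprS; ring.
rewrite IH es_cons expr0 mul1r expr1.
case: m {IH} => [|m]; ring.
Qed.

Lemma newton s m :
  m%:R * es s m = \sum_(l < m) (-1) ^+ l * ps s l.+1 * es s (m - l.+1).
Proof.
elim: s m => [|x s IH] m.
  rewrite es_nil big1 ?(mulr_natr) //.
    by case: m => //= m; rewrite mul0rn.
  by move=> i _; rewrite /ps big_nil mulr0 mul0r.
have -> : \sum_(l < m) (-1) ^+ l * ps (x :: s) l.+1 * es (x :: s) (m - l.+1)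
  = \sum_(l < m) (-1) ^+ l * x ^+ l.+1 * es (x :: s) (m - l.+1)
  + \sum_(l < m) (-1) ^+ l * ps s l.+1 * es (x :: s) (m - l.+1).
  by rewrite -big_split /=; apply: eq_bigr => i _; rewrite ps_cons; ring.
rewrite U_tel.
have -> : \sum_(l < m) (-1) ^+ l * ps s l.+1 * es (x :: s) (m - l.+1)
  = \sum_(l < m) (-1) ^+ l * ps s l.+1 * es s (m - l.+1)
  + \sum_(l < m) (-1) ^+ l * ps s l.+1 *
       (if (m - l.+1)%N is k.+1 then x * es s k else 0).
  by rewrite -big_split /=; apply: eq_bigr => i _; rewrite es_cons mulrDr.
rewrite -IH es_cons.
case: m => [|m]; first by rewrite big_ord0 !mul0r !addr0.
rewrite big_ord_recr /= subnn mulr0 addr0.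
have -> : \sum_(i < m) (-1) ^+ (widen_ord (leqnSn m) i) *
    ps s (widen_ord (leqnSn m) i).+1 *
    (if (m.+1 - (widen_ord (leqnSn m) i).+1)%N is k.+1 then x * es s k else 0)
  = x * \sum_(l < m) (-1) ^+ l * ps s l.+1 * es s (m - l.+1).
  rewrite mulr_sumr; apply: eq_bigr => i _ /=.
  have -> : (m.+1 - i.+1 = (m - i.+1).+1)%N by have := ltn_ord i; lia.
  ring.
rewrite -IH -addn1 natrD; ring.
Qed.

Lemma es0 s : es s 0 = 1.
Proof. by elim: s => [|x s IH]; rewrite ?es_nil // es_cons addr0. Qed.

Lemma es_big s k : (size s < k)%N -> es s k = 0.
Proof.
elim: s k => [|x s IH] k /=; first by case: k => // k _; rewrite es_nil.
case: k => // k; rewrite ltnS => hk; rewrite es_cons (IH k) // (IH k.+1).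
  by rewrite mulr0 addr0.
by rewrite ltnS ltnW.
Qed.

Lemma es_ge0 s : all (fun x => 0 <= x) s -> forall k, 0 <= es s k.
Proof.
elim: s => [|x s IH] /=; first by move=> _ k; rewrite es_nil ler0n.
move=> /andP[hx hs] k; rewrite es_cons; case: k => [|k].
  by rewrite addr0 IH.
by rewrite addr_ge0 ?IH // mulr_ge0 ?IH.
Qed.

Lemma es_neg s : (forall k, (1 <= k <= size s)%N -> 0 <= es s k) ->
  forall x, x \in s -> ~ (x < 0).
Proof.
move=> hk x xs xlt.
have xn0 : x != 0 by rewrite ltr0_neq0.
set t := - x^-1.
have tgt : 0 < t by rewrite /t oppr_gt0 invr_lt0.
have h1 : (Pp s).[t] = 0.
  rewrite /Pp horner_prod (big_rem x xs) /= hornerD hornerZ hornerX hornerC.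
  by rewrite /t mulrN mulfV // subrr mul0r.
have : 1 <= (Pp s).[t].
  rewrite (@horner_coef_wide _ (size (Pp s)).+1) // big_ord_recl /=.
  rewrite -/(es s 0) es0 expr0 mulr1 lerDl sumr_ge0 // => i _.
  rewrite mulr_ge0 ?exprn_ge0 ?(ltW tgt) //.
  case: (leqP (bump 0 i) (size s)) => hi.
    by apply: hk; rewrite hi.
  by rewrite -/(es s _) es_big.
by rewrite h1 ler10.
Qed.
End Newton.
Arguments ps {C}. Arguments es {C}. Arguments Pp {C}.

Section SS.
Variable R : realType.
Local Notation C := (R[i]).
Variable n : nat.

Lemma Sseq_es (X : 'M[C]_n) (s : seq C) :
  (forall l, \tr (mxpow X l.+1) = ps s l.+1) ->
  forall k, size (Sseq X k) = k.+1 /\ forall j, (j <= k)%N -> (Sseq X k)`_j = es s j.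
Proof.
move=> htr; elim=> [|k [hsz IH]] /=.
  by split=> // j; rewrite leqn0 => /eqP ->; rewrite es0.
rewrite size_rcons hsz; split=> // j hj.
rewrite nth_rcons hsz ltnS.
case: (leqP j k) => hjk; first exact: IH.
have -> : j = k.+1 by apply/eqP; rewrite eqn_leq hj.
rewrite eqxx big_add1 big_mkord /=.
have -> : \sum_(i < k.+1) (-1) ^+ i * \tr (mxpow X i.+1) * (Sseq X k)`_(k.+1 - i.+1)
   = \sum_(i < k.+1) (-1) ^+ i * ps s i.+1 * es s (k.+1 - i.+1).
  apply: eq_bigr => i _; rewrite htr IH //.
  by rewrite subSS leq_subr.
rewrite -newton mulrA mulVf ?mul1r //.
by rewrite pnatr_eq0.
Qed.

Lemma Sm_es (X : 'M[C]_n) (s : seq C) :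
  (forall l, \tr (mxpow X l.+1) = ps s l.+1) -> forall m, Sm X m = es s m.
Proof. by move=> h m; rewrite /Sm; have [_ ->] := Sseq_es X s h m. Qed.
End SS.



Section MX.
Variable R : realType.
Local Notation C := (R[i]).

Lemma adjmxE m p (A : 'M[C]_(m, p)) : adjmx A = map_mx Num.conj A^T.
Proof. by apply/matrixP => i j; rewrite !mxE. Qed.

Lemma adjmx_mul m p q (A : 'M[C]_(m, p)) (B : 'M[C]_(p, q)) :
  adjmx (A *m B) = adjmx B *m adjmx A.
Proof. by rewrite !adjmxE trmx_mul map_mxM. Qed.

Variable n : nat.

Definition qf (v : 'cV[C]_n) (A : 'M[C]_n) := (adjmx v *m A *m v) 0 0.

Lemma herm_spec (X : 'M[C]_n) : adjmx X = X ->
  exists (P : 'M[C]_n) (lam : 'rV[C]_n),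
   [/\ P *m adjmx P = 1%:M, adjmx P *m P = 1%:M,
       X = adjmx P *m diag_mx lam *m P & forall j, lam 0 j \is Num.real].
Proof.
move=> hX.
have hH : X \is hermsymmx.
  by apply/is_hermitianmxP; rewrite /= expr0 scale1r -adjmxE hX.
have hU := spectral_unitarymx X.
have hPP : spectralmx X *m adjmx (spectralmx X) = 1%:M.
  by rewrite adjmxE; apply/unitarymxP.
have hinv : invmx (spectralmx X) = adjmx (spectralmx X).
  by rewrite adjmxE invmx_unitary.
exists (spectralmx X), (spectral_diag X); split => //.
- by rewrite -hinv mulVmx // spectral_unit.
- by rewrite -hinv; apply/orthomx_spectralP/hermitian_normalmx.
- move=> j; have /mxOverP := hermitian_spectral_diag_real hH.
  by apply.
Qed.

Lemma mxpow_conj (P Q D : 'M[C]_n) l : Q *m P = 1%:M -> P *m Q = 1%:M ->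
  mxpow (Q *m D *m P) l = Q *m mxpow D l *m P.
Proof.
move=> hQP hPQ; elim: l => [|l IH] /=; first by rewrite mulmx1.
rewrite IH !mulmxA -(mulmxA _ P Q) hPQ mulmx1 -!mulmxA.
by [].
Qed.

Lemma mxpow_diag (lam : 'rV[C]_n) l :
  mxpow (diag_mx lam) l = diag_mx (\row_j (lam 0 j) ^+ l).
Proof.
elim: l => [|l IH] /=.
  by apply/matrixP => i j; rewrite !mxE; case: eqP => // ->; rewrite mxE expr0.
rewrite IH mulmx_diag; congr diag_mx; apply/rowP => j.
by rewrite !mxE exprS.
Qed.

Definition eigs (lam : 'rV[C]_n) : seq C := [seq lam 0 j | j <- enum 'I_n].

Lemma tr_mxpow (X P : 'M[C]_n) (lam : 'rV[C]_n) :
   P *m adjmx P = 1%:M -> adjmx P *m P = 1%:M ->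
   X = adjmx P *m diag_mx lam *m P ->
   forall l, \tr (mxpow X l) = ps (eigs lam) l.
Proof.
move=> h1 h2 -> l.
rewrite mxpow_conj // mxtrace_mulC mulmxA h1 mul1mx mxpow_diag mxtrace_diag.
by rewrite /ps /eigs big_map big_enum /=; apply: eq_bigr => j _; rewrite mxE.
Qed.

Lemma qf_conj (P : 'M[C]_n) (lam : 'rV[C]_n) v :
  qf v (adjmx P *m diag_mx lam *m P) =
  \sum_j ((P *m v) j 0)^* * lam 0 j * (P *m v) j 0.
Proof.
rewrite /qf !mulmxA -adjmx_mul -(mulmxA _ P v) mul_mx_diag !mxE.
by apply: eq_bigr => j _; rewrite !mxE.
Qed.

Lemma psd_eig (X P : 'M[C]_n) (lam : 'rV[C]_n) :
   P *m adjmx P = 1%:M -> X = adjmx P *m diag_mx lam *m P ->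
   (forall v, 0 <= qf v X) <-> (forall j, 0 <= lam 0 j).
Proof.
move=> h1 ->; split.
  move=> hv j; have := hv (adjmx P *m delta_mx j 0).
  rewrite qf_conj mulmxA h1 mul1mx (bigD1 j) //= big1 ?addr0.
    by rewrite !mxE !eqxx /= conjC1 mul1r mulr1.
  by move=> k hk; rewrite !mxE (negbTE hk) /= mulr0.
move=> hj v; rewrite qf_conj sumr_ge0 // => j _.
by rewrite mulrAC mulr_ge0 // mulrC mul_conjC_ge0.
Qed.

Lemma charac (X : 'M[C]_n) : adjmx X = X -> \tr X = 1 ->
  ((forall m, (2 <= m <= n)%N -> 0 <= Sm X m) <-> (forall v, 0 <= qf v X)).
Proof.
move=> hX htr1.
have [P [lam [h1 h2 hXe hreal]]] := herm_spec X hX.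
have htr := tr_mxpow X P lam h1 h2 hXe.
have hS := @Sm_es _ _ X (eigs lam) (fun l => htr l.+1).
rewrite (psd_eig X P lam h1 hXe).
have hsz : size (eigs lam) = n by rewrite size_map size_enum_ord.
split.
  move=> hm j.
  have hj : lam 0 j \in eigs lam by apply: map_f; rewrite mem_enum.
  have hn := @es_neg _ (eigs lam).
  have : ~ lam 0 j < 0.
    apply: hn hj => k /andP[hk1 hk2].
    case: (leqP 2 k) => hk.
      by rewrite -hS; apply: hm; rewrite hk -hsz.
    have -> : k = 1%N by lia.
    have := @newton _ (eigs lam) 1; rewrite big_ord1 /= es0 mulr1 expr0 mul1r mul1r.
    move=> ->; rewrite -htr /= mulmx1 htr1 ler01 //.
  by rewrite real_leNgt ?real0 // => /negP.
move=> hj m _; rewrite hS; apply: es_ge0.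
by apply/allP => x /mapP [j _ ->].
Qed.
End MX.
Arguments qf {R n}. Arguments charac {R n}.



Section Main.
Variable R : realType.
Local Notation C := (R[i]).
Variable n : nat.
Implicit Types (A B : 'M[C]_n) (x y : R).

Lemma adjmxD A B : adjmx (A + B) = adjmx A + adjmx B.
Proof. by apply/matrixP => i j; rewrite !mxE rmorphD. Qed.

Lemma adjmxN A : adjmx (- A) = - adjmx A.
Proof. by apply/matrixP => i j; rewrite !mxE rmorphN. Qed.

Lemma adjmxZ x A : adjmx ((x%:C)%C *: A) = (x%:C)%C *: adjmx A.
Proof. by apply/matrixP => i j; rewrite !mxE rmorphM /=; congr (_ * _); exact: conjc_real. Qed.

Lemma qfD v A B : qf v (A + B) = qf v A + qf v B.
Proof. by rewrite /qf mulmxDr mulmxDl mxE. Qed.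

Lemma qfN v A : qf v (- A) = - qf v A.
Proof. by rewrite /qf mulmxN mulNmx mxE. Qed.

Lemma qfZ v c A : qf v (c *: A) = c * qf v A.
Proof. by rewrite /qf -scalemxAr -scalemxAl mxE. Qed.

Lemma adjmx_delta (j : 'I_n) : adjmx (delta_mx j (0 : 'I_1) : 'M[C]_(n,1)) = delta_mx 0 j.
Proof.
apply/matrixP => a b; rewrite !mxE andbC.
by case: (_ && _) => /=; rewrite ?conjC1 ?conjC0.
Qed.

Lemma qf_delta (j : 'I_n) A : qf (delta_mx j 0) A = A j j.
Proof.
rewrite /qf adjmx_delta -rowE -colE !mxE //.
Qed.

Definition Xs (t : R) (eta rho : 'M[C]_n) :=
  ((((1 + t) / t)%:C)%C *: eta - ((t^-1)%:C)%C *: rho).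

Lemma Xs_herm t eta rho : is_hermitian eta -> is_hermitian rho ->
  is_hermitian (Xs t eta rho).
Proof.
rewrite /is_hermitian /Xs => he hr.
by rewrite adjmxD adjmxN !adjmxZ he hr.
Qed.

Lemma Xs_tr t eta rho : t != 0 -> \tr eta = 1 -> \tr rho = 1 -> \tr (Xs t eta rho) = 1.
Proof.
move=> ht he hr; rewrite /Xs mxtraceD linearN /= !mxtraceZ he hr !mulr1.
rewrite -rmorphB /=.
have -> : (1 + t) / t - t^-1 = 1 by field.
by rewrite rmorph1.
Qed.

Lemma qf_Xs t eta rho v :
  qf v (Xs t eta rho) = (((1 + t) / t)%:C)%C * qf v eta - ((t^-1)%:C)%C * qf v rho.
Proof. by rewrite /Xs qfD qfN !qfZ. Qed.
End Main.
Arguments Xs {R n}. Arguments Xs_herm {R n}. Arguments Xs_tr {R n}. Arguments qf_Xs {R n}. Arguments qfD {R n}. Arguments qfN {R n}. Arguments qfZ {R n}. Arguments qf_delta {R n}. Arguments adjmxD {R n}. Arguments adjmxN {R n}. Arguments adjmxZ {R n}.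

Lemma Wiff (R : realType) (d : nat) (rho : 'M[R[i]]_d) (hrho : density rho)
  (W : R -> forall m : nat, 'M[R[i]]_(tdim d m))
  (hWtr : forall (s : R) (m : nat), 0 < s -> (2 <= m <= d)%N ->
     forall eta : 'M[R[i]]_d, density eta ->
       \tr (W s m *m tpow eta m)
       = Sm ((((1 + s) / s)%:C)%C *: eta - ((s^-1)%:C)%C *: rho) m)
  (t : R) (ht : 0 < t) (eta : 'M[R[i]]_d) :
  witness_set (W t) eta <-> density eta /\ (forall v, 0 <= qf v (Xs t eta rho)).
Proof.
have [[hrh _] hrt] := hrho.
have tn0 : t != 0 by rewrite gt_eqF.
split.
  move=> [hden hm]; split => //.
  have [[heh _] het] := hden.
  apply/(charac _ (Xs_herm t _ _ heh hrh) (Xs_tr t _ _ tn0 het hrt)) => m hm'.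
  by rewrite /Xs -hWtr // hm.
move=> [hden hq]; split => // m hm.
have [[heh _] het] := hden.
rewrite hWtr //.
exact: (proj2 (charac _ (Xs_herm t _ _ heh hrh) (Xs_tr t _ _ tn0 het hrt)) hq).
Qed.

Theorem proposition5 (R : realType) (d : nat) (hd : (2 <= d)%N)
  (F : 'M[R[i]]_d -> Prop)
  (hFD : forall eta, F eta -> density eta)
  (hFc : mx_closed F)
  (rho : 'M[R[i]]_d) (hrho : density rho) (hrhoF : ~ F rho)
  (W : R -> forall m : nat, 'M[R[i]]_(tdim d m))
  (hWh : forall (s : R) (m : nat), 0 < s -> (2 <= m <= d)%N -> is_hermitian (W s m))
  (hWtr : forall (s : R) (m : nat), 0 < s -> (2 <= m <= d)%N ->
     forall eta : 'M[R[i]]_d, density eta ->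
       \tr (W s m *m tpow eta m)
       = Sm ((((1 + s) / s)%:C)%C *: eta - ((s^-1)%:C)%C *: rho) m)
  (s s' : R) (hs' : 0 < s') (hss' : s' < s) :
  (forall eta, witness_set (W s') eta -> witness_set (W s) eta) /\
  (exists eta, witness_set (W s) eta /\ ~ witness_set (W s') eta).
Proof.
have hs : 0 < s by apply: lt_trans hss'.
have sn0 : s != 0 by rewrite gt_eqF.
have s'n0 : s' != 0 by rewrite gt_eqF.
have s1n0 : 1 + s != 0 by rewrite gt_eqF // addr_gt0.
have WI := @Wiff R d rho hrho W hWtr.
have [[hrh hrq] hrt] := hrho.
split.
  move=> eta hw. have hh := WI s' hs' eta. have [hden hq] := hh.1 hw. apply: ((WI s hs eta).2). split; first exact: hden. move=> v.
  have [[_ heq] _] := hden.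
  have h1 := hq v; have h2 : 0 <= qf v eta := heq v.
  rewrite qf_Xs in h1. rewrite qf_Xs.
  have e1 : (((1 + s) / s)%:C)%C
     = ((s' / s)%:C)%C * (((1 + s') / s')%:C)%C + (((s - s') / s)%:C)%C.
    rewrite -rmorphM -rmorphD /=; congr (_%:C)%C. by field; rewrite s'n0 sn0.
  have e2 : ((s^-1)%:C)%C = ((s' / s)%:C)%C * ((s'^-1)%:C)%C.
    rewrite -rmorphM /=; congr (_%:C)%C. by field; rewrite s'n0 sn0.
  have p1 : 0 <= ((s' / s)%:C)%C by rewrite ler0c divr_ge0 // ltW.
  have p2 : 0 <= (((s - s') / s)%:C)%C by rewrite ler0c divr_ge0 ?subr_ge0 // ltW.
  rewrite e1 e2.
  move: (((1 + s') / s')%:C)%C ((s'^-1)%:C)%C ((s' / s)%:C)%C (((s - s') / s)%:C)%C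
    (qf v eta) (qf v rho) p1 p2 h1 h2 => a b c e x y p1 p2 h1 h2.
  have -> : (c * a + e) * x - c * b * y = c * (a * x - b * y) + e * x by ring.
  by apply: addr_ge0; apply: mulr_ge0.
have [j hj] : exists j, 0 < rho j j.
  case: (pickP (fun j => 0 < rho j j)) => [j hj|hn]; first by exists j.
  exfalso; move: hrt; rewrite /mxtrace big1.
    by move/eqP; rewrite eq_sym oner_eq0.
  move=> i _; have hge : 0 <= qf (delta_mx i 0) rho := hrq _.
  rewrite qf_delta in hge.
  by move: hge; rewrite le_eqVlt hn orbF => /eqP <-.
pose o0 : 'I_d := Ordinal (ltnW hd).
pose o1 : 'I_d := Ordinal hd.
pose k := if j == o0 then o1 else o0.
have hjk : (j == k) = false.
  rewrite /k; case: (eqVneq j o0) => [->|ne]; first by [].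
  by rewrite (negbTE ne).
pose sigma : 'M[R[i]]_d := delta_mx k k.
have sh : is_hermitian sigma.
  rewrite /is_hermitian; apply/matrixP => a b; rewrite !mxE andbC.
  by case: (_ && _) => /=; rewrite ?conjC1 ?conjC0.
have sq : forall v, 0 <= qf v sigma.
  move=> v; rewrite /qf /sigma -(mul_delta_mx (0 : 'I_1)) !mulmxA -colE.
  rewrite -mulmxA -rowE !mxE big_ord1 !mxE.
  by rewrite mulrC mul_conjC_ge0.
have st : \tr sigma = 1.
  rewrite /mxtrace (bigD1 k) //= !mxE eqxx /= big1 ?addr0 // => a ha.
  by rewrite mxE (negbTE ha).
pose eta := (((1 + s)^-1)%:C)%C *: (rho + (s%:C)%C *: sigma).
have hde : density eta.
  split; [split|].
  - by rewrite /is_hermitian /eta adjmxZ adjmxD adjmxZ sh hrh.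
  - move=> v; change (0 <= qf v eta); rewrite /eta qfZ qfD qfZ.
    apply: mulr_ge0; first by rewrite ler0c invr_ge0 addr_ge0 // ltW.
    apply: addr_ge0; first exact: hrq.
    by apply: mulr_ge0; [rewrite ler0c ltW | exact: sq].
  - rewrite /eta mxtraceZ mxtraceD mxtraceZ hrt st mulr1.
    have -> : (1 : R[i]) + (s%:C)%C = ((1 + s)%:C)%C by rewrite rmorphD rmorph1.
    by rewrite -rmorphM mulVf // rmorph1.
have hXs : Xs s eta rho = sigma.
  rewrite /Xs /eta scalerA scalerDr scalerA -!rmorphM.
  have -> : (1 + s) / s * (1 + s)^-1 = s^-1 by field; rewrite ?s1n0 ?sn0.
  have -> : s^-1 * s = 1 by field.
  by rewrite rmorph1 scale1r addrAC subrr add0r.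
exists eta; split.
  apply: ((WI s hs eta).2); split; first exact: hde.
  by move=> v; rewrite hXs; exact: sq.
move=> hw; have [_ hq] := (WI s' hs' eta).1 hw.
have := hq (delta_mx j 0); rewrite qf_delta /Xs /eta /sigma !mxE hjk /=.
rewrite mulr0 addr0 mulrA -mulrBl -rmorphM -rmorphB /=.
have hcc : (1 + s') / s' * (1 + s)^-1 - s'^-1 < 0.
  have -> : (1 + s') / s' * (1 + s)^-1 - s'^-1 = (s' - s) / (s' * (1 + s)).
    by field; rewrite ?s1n0 ?s'n0.
  by rewrite pmulr_llt0 ?subr_lt0 // invr_gt0 mulr_gt0 // addr_gt0.
rewrite pmulr_lge0 // ler0c.
by rewrite leNgt hcc.
Qed.
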